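(* Let $M\in GL(2n,\mathbb{R})$ and assume that $M^{T}GM\in\operatorname{Sp}(n)$ for every matrix of the form $$G=\begin{pmatrix} X & 0\\ 0 & X^{-1}\end{pmatrix},$$ where $X$ ranges over all real symmetric positive definite $n\times n$ matrices. Then $M$ is either symplectic or antisymplectic.
   Context: $J=\begin{pmatrix}0&I\\-I&0\end{pmatrix}$ with $I$ the $n\times n$ identity. The symplectic group is $\operatorname{Sp}(n)=\{S\in GL(2n,\mathbb{R}): S^TJS=J\}$. A matrix $M\in GL(2n,\mathbb{R})$ is antisymplectic if $M^TJM=-J$, equivalently $CM\in\operatorname{Sp}(n)$ where $C=\begin{pmatrix}I&0\\0&-I\end{pmatrix}$. *)

(* Defs.v *)
From HB Require Import structures.
From mathcomp Require Import all_boot all_order all_algebra.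
Set Implicit Arguments. Unset Strict Implicit. Unset Printing Implicit Defensive.
Import Order.TTheory GRing.Theory Num.Theory.
Local Open Scope ring_scope.

Definition Jmx (R : pzRingType) (n : nat) : 'M[R]_(n + n) :=
  block_mx 0 1%:M (- 1%:M) 0.

Definition symplectic (R : pzRingType) (n : nat) (S : 'M[R]_(n + n)) : Prop :=
  S^T *m Jmx R n *m S = Jmx R n.

Definition antisymplectic (R : pzRingType) (n : nat) (M : 'M[R]_(n + n)) : Prop :=
  M^T *m Jmx R n *m M = - Jmx R n.

Definition sym_posdef (R : numDomainType) (n : nat) (X : 'M[R]_n) : Prop :=
  X^T = X /\ forall v : 'rV[R]_n, v != 0 -> 0 < (v *m X *m v^T) 0 0.

(* Main.v *)
Require Import Defs.
From HB Require Import structures.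
From mathcomp Require Import all_boot all_order all_algebra.
From mathcomp Require Import ring lra.
Set Implicit Arguments. Unset Strict Implicit. Unset Printing Implicit Defensive.
Import Order.TTheory GRing.Theory Num.Theory.
Local Open Scope ring_scope.

Section H.
Variable R : realFieldType.

Lemma mx11E (m : nat) (c : 'M[R]_(m,1)) (r : 'M[R]_(1,m)) a b :
  (c *m r) a b = c a 0 * r 0 b.
Proof. by rewrite mxE big_ord1. Qed.

Lemma vvT_pos (n : nat) (v : 'rV[R]_n) : v != 0 -> 0 < (v *m v^T) 0 0.
Proof.
move=> hv; rewrite mxE lt_def sumr_ge0 ?andbT; last first.
  by move=> i _; rewrite mxE -expr2 sqr_ge0.
apply/negP => /eqP h; move/negP: hv; apply; apply/eqP/matrixP => i j.
rewrite (ord1 i) mxE.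
have hj := @psumr_eq0P R _ xpredT (fun k => v 0 k * v^T k 0) _ h j isT.
rewrite mxE in hj; apply/eqP; rewrite -[_ == _]orbb -mulf_eq0 hj //.
by move=> k _; rewrite mxE -expr2 sqr_ge0.
Qed.

Lemma spd_unit (n : nat) (X : 'M[R]_n) : sym_posdef X -> X \in unitmx.
Proof.
case=> _ hp; rewrite -row_free_unit -kermx_eq0; apply/eqP/row_matrixP => i.
rewrite row0; apply/eqP; apply/negPn/negP => hv; have := hp _ hv.
have -> : row i (kermx X) *m X = 0 by apply/sub_kermxP; exact: row_sub.
by rewrite mul0mx mxE ltxx.
Qed.

Lemma spd1 (n : nat) : sym_posdef (1%:M : 'M[R]_n).
Proof. by split; [rewrite trmx1 | move=> v hv; rewrite mulmx1; exact: vvT_pos]. Qed.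

Lemma spd2 (n : nat) : sym_posdef (2%:M : 'M[R]_n).
Proof.
split; first by rewrite tr_scalar_mx.
move=> v hv; rewrite mul_mx_scalar -scalemxAl mxE; apply: mulr_gt0 => //.
exact: vvT_pos.
Qed.

Lemma spdU (n : nat) (u : 'rV[R]_n) : sym_posdef (1%:M + u^T *m u).
Proof.
split; first by rewrite linearD /= trmx1 trmx_mul trmxK.
move=> v hv; rewrite mulmxDr mulmx1 mulmxDl mxE.
have h1 := vvT_pos hv.
have h2 : 0 <= (v *m (u^T *m u) *m v^T) 0 0.
  have -> : v *m (u^T *m u) *m v^T = (v *m u^T) *m (v *m u^T)^T.
    by rewrite trmx_mul trmxK !mulmxA.
  by rewrite mx11E [_^T 0 0]mxE -expr2 sqr_ge0.
lra.
Qed.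

Lemma blockGKG (n : nat) (X Y A B C D : 'M[R]_n) :
  block_mx X 0 0 Y *m block_mx A B C D *m block_mx X 0 0 Y =
  block_mx (X *m A *m X) (X *m B *m Y) (Y *m C *m X) (Y *m D *m Y).
Proof. by rewrite !mulmx_block !mul0mx !mulmx0 !addr0 !add0r. Qed.

Lemma JJ (n : nat) : Jmx R n *m Jmx R n = - 1%:M.
Proof.
rewrite /Jmx mulmx_block (scalar_mx_block n n) opp_block_mx.
by rewrite !mul0mx !mulmx0 !add0r !addr0 mul1mx mulmx1 oppr0.
Qed.

Lemma Jtr (n : nat) : (Jmx R n)^T = - Jmx R n.
Proof. by rewrite /Jmx tr_block_mx !trmx0 linearN /= trmx1 opp_block_mx !oppr0 opprK. Qed.

Lemma scalar_of_comm (n : nat) (B : 'M[R]_n.+1) :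
  (forall u : 'rV_n.+1, u^T *m (u *m B) = B *m u^T *m u) -> B = (B 0 0)%:M.
Proof.
move=> h.
have hd : forall i b, b != i -> B i b = 0.
  move=> i b hb; have := h (delta_mx 0 i); move/matrixP/(_ i b).
  rewrite -rowE trmx_delta -colE !mx11E !mxE /=.
  by rewrite !eqxx (negbTE hb) mul1r mulr0.
have he : forall i j, i != j -> B i i = B j j.
  move=> i j hij; have := h (delta_mx 0 i + delta_mx 0 j).
  move/matrixP/(_ i j).
  rewrite linearD /= !trmx_delta mulmxDl -!rowE [B *m _]mulmxDr -!colE !mx11E !mxE /=.
  have hji : (j == i) = false by rewrite eq_sym (negbTE hij).
  rewrite !eqxx (negbTE hij) hji /= => e; lra.
apply/matrixP => a b; rewrite mxE; case: (eqVneq a b) => [<-|hab].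
  rewrite mulr1n; case: (eqVneq a 0) => [->//|ha0]; exact: he.
by rewrite mulr0n hd // eq_sym.
Qed.

Lemma c3 : (2 * 2 - 1 : R) != 0.
Proof. apply: lt0r_neq0; lra. Qed.
Lemma c4 : (2^-1 * 2^-1 - 1 : R) != 0.
Proof. apply: ltr0_neq0; lra. Qed.

Lemma cancel2 (n : nat) (A B P Q : 'M[R]_n) : A \in unitmx -> B \in unitmx ->
  A *m P *m B = A *m Q *m B -> P = Q.
Proof.
move=> hA hB /(congr1 (mulmx (invmx A))); rewrite !mulmxA mulVmx // !mul1mx.
by move/(congr1 (mulmx^~ (invmx B))); rewrite /= !mulmxK.
Qed.
End H.

Theorem lemma1 (R : realFieldType) (n : nat) (M : 'M[R]_(n + n))
  (hM : M \in unitmx)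
  (hG : forall X : 'M[R]_n, sym_posdef X ->
          symplectic (M^T *m block_mx X 0 0 (invmx X) *m M)) :
  symplectic M \/ antisymplectic M.
Proof.
case: n M hM hG => [|n] M hM hG.
  by left; apply/matrixP => -[i hi].
set J := Jmx R n.+1.
set K := M *m J *m M^T.
have hP : forall X, sym_posdef X ->
    M^T *m (block_mx X 0 0 (invmx X) *m K *m block_mx X 0 0 (invmx X)) *m M = J.
  move=> X hX; have := hG X hX; rewrite /symplectic.
  have hGt : (block_mx X 0 0 (invmx X))^T = block_mx X 0 0 (invmx X).
    by rewrite tr_block_mx !trmx0 trmx_inv hX.1.
  by rewrite !trmx_mul trmxK hGt /K !mulmxA.
have hK : M^T *m K *m M = J.
  have := hP _ (spd1 R n.+1).
  by rewrite invmx1 -scalar_mx_block mul1mx mulmx1.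
have hPK : forall X, sym_posdef X ->
    block_mx X 0 0 (invmx X) *m K *m block_mx X 0 0 (invmx X) = K.
  move=> X hX; apply: (@cancel2 R _ (M^T) M); rewrite ?unitmx_tr //.
  by rewrite hP // hK.
set A := ulsubmx K; set B := ursubmx K; set C := dlsubmx K; set D := drsubmx K.
have eK : K = block_mx A B C D by rewrite submxK.
have hbl : forall X, sym_posdef X ->
   [/\ X *m A *m X = A, X *m B *m invmx X = B,
       invmx X *m C *m X = C & invmx X *m D *m invmx X = D].
  move=> X hX; have := hPK X hX; rewrite eK blockGKG.
  by move/eq_block_mx.
have [h2A _ _ h2D] := hbl _ (spd2 R n.+1).
have hA0 : A = 0.
  move: h2A; rewrite mul_scalar_mx mul_mx_scalar scalerA => e.
  have : (2 * 2 - 1) *: A = 0 by rewrite scalerBl e scale1r subrr.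
  by move/eqP; rewrite scaler_eq0 (negbTE (c3 R)) => /eqP.
have hD0 : D = 0.
  move: h2D; rewrite invmx_scalar mul_scalar_mx mul_mx_scalar scalerA => e.
  have : (2^-1 * 2^-1 - 1) *: D = 0 by rewrite scalerBl e scale1r subrr.
  by move/eqP; rewrite scaler_eq0 (negbTE (c4 R)) => /eqP.
have hBs : B = (B 0 0)%:M.
  apply: scalar_of_comm => u.
  have hX := spdU u; have hXu := spd_unit hX.
  have [_ hb _ _] := hbl _ hX.
  have : (1%:M + u^T *m u) *m B *m invmx (1%:M + u^T *m u) *m (1%:M + u^T *m u)
     = B *m (1%:M + u^T *m u) by rewrite hb.
  rewrite -(mulmxA _ (invmx _)) mulVmx // mulmx1.
  rewrite mulmxDl mul1mx mulmxDr mulmx1 => /addrI e.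
  by rewrite mulmxA e mulmxA.
set b := B 0 0.
have Kt : K^T = - K.
  by rewrite /K !trmx_mul trmxK Jtr mulNmx mulmxN mulmxA.
have hC : C = - b%:M.
  move: Kt; rewrite eK tr_block_mx opp_block_mx => /eq_block_mx [_ _ hBt _].
  by rewrite -[C]opprK -hBt hBs tr_scalar_mx.
have hKb : M *m J *m M^T = b *: J.
  by rewrite -/K eK hA0 hD0 hC hBs /J /Jmx scale_block_mx !scaler0 scalerN scalemx1.
have hJM : J *m M^T = b *: (invmx M *m J).
  by rewrite -[J *m M^T](mulKmx hM) (mulmxA M J) hKb -scalemxAr.
have hMt : M^T = - b *: (J *m invmx M *m J).
  rewrite -[M^T]mul1mx -[1%:M]opprK -(JJ R) mulNmx -mulmxA hJM scalemxAr.
  by rewrite scaleNr !mulmxA scalemxAr.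
have hJJ : J *m invmx M *m J *m J *m M = - J.
  by rewrite -(mulmxA _ J J) JJ mulmxN mulmx1 mulNmx -mulmxA mulVmx // mulmx1.
have hQ : M^T *m J *m M = b *: J.
  by rewrite hMt -!scalemxAl hJJ scaleNr scalerN opprK.
have hbb : (b * b) *: J = J.
  by rewrite -scalerA -hQ scalemxAl scalemxAr -hKb -/K hK.
have : (b * b - 1) *: J = 0 by rewrite scalerBl hbb scale1r subrr.
move/eqP; rewrite scaler_eq0 => /orP[h|hJ]; last first.
  move/eqP/matrixP: hJ => /(_ (lshift n.+1 0) (rshift n.+1 0)).
  rewrite /J /Jmx block_mxEur !mxE /= => /eqP.
  by rewrite mulr1n oner_eq0.
have hf : b * b - 1 = (b - 1) * (b + 1) by ring.
move: h; rewrite hf mulf_eq0 subr_eq0 addr_eq0 => /orP[/eqP hb1|/eqP hb1].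
  by left; rewrite /symplectic -/J hQ hb1 scale1r.
by right; rewrite /antisymplectic -/J hQ hb1 scaleN1r.
Qed.
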